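(* Let $E\in M_n(\mathbb{FT})$ be idempotent. Then the column space $C(E)$ is min-plus convex if and only if there exists an idempotent $F\in M_n(\mathbb{FT})$ with $F_{i,i}=0$ for all $i$ and $C(F)=C(E)$.
   Context: $\mathbb{FT}$ is $\mathbb{R}$ with $a\oplus b=\max(a,b)$, $a\otimes b=a+b$; $M_n(\mathbb{FT})$ is the semigroup of real $n\times n$ matrices under $(A\otimes B)_{i,j}=\max_k(A_{i,k}+B_{k,j})$. $C(A)\subseteq\mathbb{R}^n$ is the set of all finite componentwise maxima of columns of $A$ each shifted by a real constant (added to all coordinates). A subset $X\subseteq\mathbb{R}^n$ is min-plus convex if it is closed under componentwise minimum and under adding a real constant to all coordinates. *)

(* Defs.v *)
From mathcomp Require Import all_boot all_order all_algebra.
From mathcomp Require Import Rstruct.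
From Stdlib Require Import Reals.
Set Implicit Arguments. Unset Strict Implicit. Unset Printing Implicit Defensive.
Import Order.TTheory GRing.Theory Num.Theory.
Local Open Scope ring_scope.

(* Tropical (max-plus) matrix product on n x n real matrices.
   The seed A i j + B j j is itself one of the terms (k = j), so this is
   exactly max_k (A i k + B k j). *)
Definition tmul (n : nat) (A B : 'M[R]_n) : 'M[R]_n :=
  \matrix_(i, j) \big[Order.max/A i j + B j j]_(k < n) (A i k + B k j).

Definition tidempotent (n : nat) (E : 'M[R]_n) : Prop := tmul E E = E.

(* Componentwise maximum of a nonempty finite family of shifted columns:
   the family is (c0,l0) :: s, a column index and a real shift each. *)
Definition tcomb (n : nat) (A : 'M[R]_n) (c0 : 'I_n) (l0 : R)
  (s : seq ('I_n * R)) : 'I_n -> R :=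
  fun i => \big[Order.max/A i c0 + l0]_(p <- s) (A i p.1 + p.2).

Definition colspace (n : nat) (A : 'M[R]_n) : ('I_n -> R) -> Prop :=
  fun x => exists c0 l0 s, forall i, x i = tcomb A c0 l0 s i.

Definition minplus_convex (n : nat) (X : ('I_n -> R) -> Prop) : Prop :=
  (forall x y, X x -> X y -> X (fun i => Order.min (x i) (y i))) /\
  (forall x (l : R), X x -> X (fun i => x i + l)).

(* Main.v *)
Require Import Defs.
From mathcomp Require Import all_boot all_order all_algebra.
From mathcomp Require Import Rstruct.
From Stdlib Require Import Reals.
From mathcomp Require Import lra.
Import Order.TTheory GRing.Theory Num.Theory.
Local Open Scope ring_scope.

Lemma bigmax_leP {I : eqType} (s : seq I) (x0 b : R) (f : I -> R) :
  (\big[Order.max/x0]_(p <- s) f p <= b) <-> (x0 <= b /\ forall p, p \in s -> f p <= b).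
Proof.
elim: s => [|a s IH]; rewrite ?big_nil ?big_cons.
- by split; [move=> h; split=> // p; rewrite in_nil | case].
- rewrite ge_max; split.
  + move=> /andP[ha /IH [h0 hs]]; split=> // p; rewrite in_cons => /orP[/eqP->|]; auto.
  + move=> [h0 hs]; apply/andP; split; first by apply: hs; rewrite mem_head.
    by apply/IH; split=> // p hp; apply: hs; rewrite in_cons hp orbT.
Qed.

Lemma bigmin_geP {I : eqType} (s : seq I) (x0 b : R) (f : I -> R) :
  (b <= \big[Order.min/x0]_(p <- s) f p) <-> (b <= x0 /\ forall p, p \in s -> b <= f p).
Proof.
elim: s => [|a s IH]; rewrite ?big_nil ?big_cons.
- by split; [move=> h; split=> // p; rewrite in_nil | case].
- rewrite le_min; split.
  + move=> /andP[ha /IH [h0 hs]]; split=> // p; rewrite in_cons => /orP[/eqP->|]; auto.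
  + move=> [h0 hs]; apply/andP; split; first by apply: hs; rewrite mem_head.
    by apply/IH; split=> // p hp; apply: hs; rewrite in_cons hp orbT.
Qed.

Lemma bigmax_seed {I : eqType} (s : seq I) (x0 : R) (f : I -> R) :
  x0 <= \big[Order.max/x0]_(p <- s) f p.
Proof. by have [] := (bigmax_leP s x0 _ f).1 (lexx _). Qed.

Lemma bigmax_mem {I : eqType} (s : seq I) (x0 : R) (f : I -> R) p :
  p \in s -> f p <= \big[Order.max/x0]_(p <- s) f p.
Proof. by have [_ h] := (bigmax_leP s x0 _ f).1 (lexx _); apply: h. Qed.

Lemma bigmin_seed {I : eqType} (s : seq I) (x0 : R) (f : I -> R) :
  \big[Order.min/x0]_(p <- s) f p <= x0.
Proof. by have [] := (bigmin_geP s x0 _ f).1 (lexx _). Qed.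

Lemma bigmin_mem {I : eqType} (s : seq I) (x0 : R) (f : I -> R) p :
  p \in s -> \big[Order.min/x0]_(p <- s) f p <= f p.
Proof. by have [_ h] := (bigmin_geP s x0 _ f).1 (lexx _); apply: h. Qed.

Definition gmat n (E : 'M[R]_n) : 'M[R]_n :=
  \matrix_(i, j) \big[Order.min/E i j - E j j]_(k < n) (E i k - E j k).

Arguments gmat {n}.

Lemma gmat_le n (E : 'M[R]_n) i j k : gmat E i j <= E i k - E j k.
Proof. by rewrite mxE; apply: (bigmin_mem _ _ (fun k => E i k - E j k)); rewrite mem_index_enum. Qed.
Arguments gmat_le {n} E i j k.

Lemma gmat_diag n (E : 'M[R]_n) i : gmat E i i = 0.
Proof.
rewrite mxE; apply/le_anti/andP; split.
- by apply: le_trans (bigmin_seed _ _ _) _; rewrite subrr.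
- by apply/bigmin_geP; split; [rewrite subrr | move=> p _; rewrite subrr].
Qed.
Arguments gmat_diag {n} E i.

Lemma colspace_ext n (A : 'M[R]_n) x y :
  (forall i, x i = y i) -> colspace A x -> colspace A y.
Proof. by move=> e [c [l [s h]]]; exists c, l, s => i; rewrite -e. Qed.
Arguments colspace_ext {n A x y}.

Lemma K n (E : 'M[R]_n) x : colspace E x -> forall i j, gmat E i j + x j <= x i.
Proof.
move=> [c0 [l0 [s hx]]] i j; rewrite !hx.
suff h : tcomb E c0 l0 s j <= tcomb E c0 l0 s i - gmat E i j by lra.
apply/bigmax_leP; split.
- have := gmat_le E i j c0; have : E i c0 + l0 <= tcomb E c0 l0 s i := bigmax_seed s (E i c0 + l0) (fun p => E i p.1 + p.2).
  lra.
- move=> p hp; have := gmat_le E i j p.1.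
  have : E i p.1 + p.2 <= tcomb E c0 l0 s i := bigmax_mem s (E i c0 + l0) (fun p => E i p.1 + p.2) p hp.
  lra.
Qed.
Arguments K {n E x}.

Lemma colspace_max n (A : 'M[R]_n) x y : colspace A x -> colspace A y ->
  colspace A (fun i => Order.max (x i) (y i)).
Proof.
move=> [c [l [s hx]]] [c' [l' [s' hy]]].
exists c, l, (s ++ (c', l') :: s') => i; rewrite hx hy /tcomb.
apply/le_anti/andP; split.
- rewrite ge_max; apply/andP; split.
  + apply/bigmax_leP; split; first exact: bigmax_seed.
    by move=> p hp; apply: (bigmax_mem _ _ (fun p => A i p.1 + p.2)); rewrite mem_cat hp.
  + apply/bigmax_leP; split.
      apply: (bigmax_mem _ _ (fun p => A i p.1 + p.2) (c', l')).
      by rewrite mem_cat mem_head orbT.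
    by move=> p hp; apply: (bigmax_mem _ _ (fun p => A i p.1 + p.2));
      rewrite mem_cat in_cons hp !orbT.
- apply/bigmax_leP; split.
    by rewrite le_max; apply/orP; left; exact: bigmax_seed.
  move=> p; rewrite mem_cat in_cons => /orP[hp|/orP[/eqP->|hp]]; rewrite le_max;
    apply/orP; [left|right|right].
  + exact: (bigmax_mem _ _ (fun p => A i p.1 + p.2)).
  + exact: bigmax_seed.
  + exact: (bigmax_mem _ _ (fun p => A i p.1 + p.2)).
Qed.
Arguments colspace_max {n A x y}.

Lemma idem_le n (F : 'M[R]_n) : tidempotent F -> forall i j c, F i j + F j c <= F i c.
Proof.
move=> hF i j c.
have h := congr1 (fun M : 'M[R]_n => M i c) hF; simpl in h; rewrite mxE in h.
rewrite -h; apply: (bigmax_mem _ _ (fun k => F i k + F k c)); exact: mem_index_enum.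
Qed.
Arguments idem_le {n F}.

Lemma colF_fix n (F : 'M[R]_n) x : tidempotent F -> colspace F x ->
  forall i j, F i j + x j <= x i.
Proof.
move=> hF [c0 [l0 [s hx]]] i j; rewrite !hx.
suff h : tcomb F c0 l0 s j <= tcomb F c0 l0 s i - F i j by lra.
apply/bigmax_leP; split.
- have := idem_le hF i j c0; have : F i c0 + l0 <= tcomb F c0 l0 s i := bigmax_seed s (F i c0 + l0) (fun p => F i p.1 + p.2).
  lra.
- move=> p hp; have := idem_le hF i j p.1.
  have : F i p.1 + p.2 <= tcomb F c0 l0 s i := bigmax_mem s (F i c0 + l0) (fun p => F i p.1 + p.2) p hp.
  lra.
Qed.
Arguments colF_fix {n F x}.

Lemma fix_col n (F : 'M[R]_n) x (c0 : 'I_n) : (forall i, F i i = 0) ->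
  (forall i j, F i j + x j <= x i) -> colspace F x.
Proof.
move=> hd hfix; exists c0, (x c0), [seq (j, x j) | j <- index_enum 'I_n] => i.
apply/le_anti/andP; split.
- apply: le_trans (bigmax_mem _ _ (fun p => F i p.1 + p.2) (i, x i) _).
    by rewrite /= hd add0r.
  by apply/map_f; rewrite mem_index_enum.
- apply/bigmax_leP; split; first exact: hfix.
  by move=> p /mapP [j _ ->]; exact: hfix.
Qed.

Lemma convexF n (F : 'M[R]_n) : tidempotent F -> (forall i, F i i = 0) ->
  minplus_convex (colspace F).
Proof.
move=> hF hd; split.
- move=> x y hx hy; have [c0 _] := hx; apply: (fix_col _ _ _ c0 hd) => i j.
  have := colF_fix hF hx i j; have := colF_fix hF hy i j.
  have m1 : Order.min (x j) (y j) <= x j by rewrite ge_min lexx.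
  have m2 : Order.min (x j) (y j) <= y j by rewrite ge_min lexx orbT.
  move=> h1 h2; rewrite le_min; apply/andP; split; lra.
- move=> x l hx; have [c0 _] := hx; apply: (fix_col _ _ _ c0 hd) => i j.
  have := colF_fix hF hx i j; lra.
Qed.
Arguments convexF {n F}.

Theorem theorem6p1 (n : nat) (E : 'M[R]_n) :
  tidempotent E ->
  (minplus_convex (colspace E) <->
   exists F : 'M[R]_n,
     tidempotent F /\ (forall i, F i i = 0) /\
     (forall x, colspace F x <-> colspace E x)).
Proof.
move=> _; split; last first.
  move=> [F [hF [hd heq]]]; have [c1 c2] := convexF hF hd; split.
  - by move=> x y /heq hx /heq hy; apply/heq; apply: c1.
  - by move=> x l /heq hx; apply/heq; apply: c2.
move=> [c1 c2].
have gen : forall s c j, colspace E (fun i =>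
    \big[Order.min/E i c - E j c]_(k <- s) (E i k - E j k)).
  elim=> [|a s IH] c j.
    by exists c, (- E j c), [::] => i; rewrite big_nil /tcomb big_nil.
  have hk : colspace E (fun i => E i a - E j a).
    by exists a, (- E j a), [::] => i; rewrite /tcomb big_nil.
  by apply: (colspace_ext _ (c1 _ _ hk (IH c j))) => i /=; rewrite big_cons.
have colg : forall j, colspace E (fun i => gmat E i j).
  by move=> j; apply: (colspace_ext _ (gen (index_enum 'I_n) j j)) => i; rewrite mxE.
exists (gmat E); split; [|split].
- apply/matrixP => i j; rewrite /tmul [X in X = _]mxE.
  apply/le_anti/andP; split.
  + apply/bigmax_leP; split; first by rewrite gmat_diag addr0.
    by move=> k _; apply: (K (colg j)).
  + by apply: le_trans (bigmax_seed _ _ _); rewrite gmat_diag addr0.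
- exact: gmat_diag.
- move=> x; split.
  + move=> [c0 [l0 [s hx]]].
    apply: (colspace_ext (fun i => esym (hx i))).
    elim: s {hx} => [|p s IH].
      apply: (colspace_ext _ (c2 _ l0 (colg c0))) => i /=.
      by rewrite /tcomb big_nil.
    apply: (colspace_ext _ (colspace_max (c2 _ p.2 (colg p.1)) IH)) => i /=.
    by rewrite /tcomb big_cons.
  + move=> hx; have [c0 _] := hx; apply: (fix_col _ _ _ c0 (gmat_diag E)).
    exact: K hx.
Qed.
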